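(* Let $k \in \mathbb{R}^n$ be a constant vector and consider the dynamics $\dot{x} = k$. Let $\mathcal{X}_0 \subseteq \mathbb{R}^n$ be a nonempty compact convex initial set and let $\mathcal{I} \subseteq \mathbb{R}^n$ be a closed convex location invariant with $\mathcal{X}_0 \cap \mathcal{I} \neq \emptyset$. For $s \ge 0$ let $\mathcal{R}(s) = \mathcal{X}_0 \oplus \{ks\} = \{x + ks \mid x \in \mathcal{X}_0\}$ be the set of states reachable at time $s$, and write $\mathcal{R}(s) \vdash \mathcal{I}$ if $\mathcal{R}(s) \cap \mathcal{I} \neq \emptyset$. Assume that $\mathcal{R}(s) \not\vdash \mathcal{I}$ for some $s \ge 0$, and let $t = \sup\{ s \ge 0 \mid \mathcal{R}(s) \vdash \mathcal{I}\}$ be the exact time at which the reachable states violate the invariant. Let $\delta_C > 0$ (coarse time step) and $\delta_F > 0$ (fine time step). Define the approximate crossing time $t'$ by the following coarse-then-fine search: let $i_C$ be the least positive integer with $\mathcal{R}(i_C \delta_C) \not\vdash \mathcal{I}$, put $t_1 = (i_C - 1)\delta_C$, let $i_F$ be the least nonnegative integer with $\mathcal{R}(t_1 + i_F \delta_F) \not\vdash \mathcal{I}$, and set $t' = t_1 + i_F \delta_F$. Then $|t - t'| \le \delta_F$.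
   Context: The Minkowski sum is $A \oplus B = \{a + b \mid a \in A, b \in B\}$. In the paper's setting the time step $\delta_C$ is $T/10$ and $\delta_F = \delta_C/10$ for a time horizon $T$, and the reachable sets are represented by their support functions $\sup_{\mathcal{X}}(\ell) = \sup\{\ell\cdot x \mid x \in \mathcal{X}\}$; these specific choices are not needed for the claim. *)

(* Defs.v *)
From HB Require Import structures.
From mathcomp Require Import all_boot all_order all_algebra.
From mathcomp Require Import all_classical all_reals all_analysis.
Set Implicit Arguments. Unset Strict Implicit. Unset Printing Implicit Defensive.
Import Order.TTheory GRing.Theory Num.Theory.
Import numFieldNormedType.Exports.
Local Open Scope classical_set_scope.
Local Open Scope ring_scope.

Definition convexRn (R : realType) (n : nat) (A : set 'rV[R]_n) : Prop :=
  forall (x y : 'rV[R]_n) (l : R), A x -> A y -> 0 <= l -> l <= 1 ->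
    A (l *: x + (1 - l) *: y).

Definition reach (R : realType) (n : nat) (X0 : set 'rV[R]_n) (k : 'rV[R]_n)
  (s : R) : set 'rV[R]_n := [set x + s *: k | x in X0].

Definition sat (R : realType) (n : nat) (Rs I : set 'rV[R]_n) : Prop :=
  Rs `&` I !=set0.

(* Main.v *)
Require Import Defs.
From HB Require Import structures.
From mathcomp Require Import all_boot all_order all_algebra.
From mathcomp Require Import all_classical all_reals all_analysis.
From mathcomp Require Import lra.
Import Order.TTheory GRing.Theory Num.Theory.
Import numFieldNormedType.Exports.
Local Open Scope classical_set_scope.
Local Open Scope ring_scope.

Lemma sat_conv (R : realType) (n : nat) (k : 'rV[R]_n)
    (X0 I : set 'rV[R]_n) (a b : R) :
  convexRn X0 -> convexRn I -> X0 `&` I !=set0 ->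
  0 <= a -> a <= b -> sat (reach X0 k b) I -> sat (reach X0 k a) I.
Proof.
move=> cX cI [x0 [X0x0 Ix0]] a0 ab [y [[x1 X0x1 <-] Iy]].
have b0 : 0 < b \/ b = 0.
  by have := le_trans a0 ab; rewrite le_eqVlt => /orP[/eqP ->|->]; [right|left].
case: b0 => [bp|b0]; last first.
  have -> : a = 0 by apply/eqP; rewrite eq_le a0 -b0 ab.
  exists x0; split=> //; exists x0 => //; by rewrite scale0r addr0.
set l := a / b.
have l0 : 0 <= l by rewrite /l divr_ge0 // ltW.
have l1 : l <= 1 by rewrite /l ler_pdivrMr // mul1r.
exists (l *: (x1 + b *: k) + (1 - l) *: x0); split; last exact: cI.
exists (l *: x1 + (1 - l) *: x0); first exact: cX.
rewrite scalerDr scalerA /l mulfVK; last by rewrite gt_eqF.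
by rewrite addrAC.
Qed.

Theorem mainTheorem1 (R : realType) (n : nat) (k : 'rV[R]_n)
    (X0 I : set 'rV[R]_n) (dC dF : R) (iC iF : nat) :
  X0 !=set0 -> compact X0 -> convexRn X0 ->
  closed I -> convexRn I ->
  X0 `&` I !=set0 ->
  (exists s : R, 0 <= s /\ ~ sat (reach X0 k s) I) ->
  0 < dC -> 0 < dF ->
  (* i_C is the least positive integer with R(i_C dC) not |- I *)
  (0 < iC)%N -> ~ sat (reach X0 k (iC%:R * dC)) I ->
  (forall j : nat, (0 < j)%N -> (j < iC)%N -> sat (reach X0 k (j%:R * dC)) I) ->
  (* i_F is the least nonnegative integer with R(t1 + i_F dF) not |- I,
     where t1 = (i_C - 1) dC *)
  ~ sat (reach X0 k ((iC.-1)%:R * dC + iF%:R * dF)) I ->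
  (forall j : nat, (j < iF)%N ->
     sat (reach X0 k ((iC.-1)%:R * dC + j%:R * dF)) I) ->
  let t := sup [set s : R | 0 <= s /\ sat (reach X0 k s) I] in
  let t' := (iC.-1)%:R * dC + iF%:R * dF in
  `|t - t'| <= dF.
Proof.
move=> _ _ cX _ cI X0I _ dCp dFp iC0 _ hC nF hF; cbv zeta.
have sat0 : sat (reach X0 k 0) I.
  case: X0I => x [Xx Ix]; exists x; split=> //; exists x => //.
  by rewrite scale0r addr0.
case: iF nF hF => [|iF] nF hF.
  exfalso; apply: nF; rewrite mul0r addr0.
  case E: iC.-1 => [|m]; first by rewrite mul0r.
  apply: hC; first by [].
  by rewrite -E ltn_predL.
have t1ge : 0 <= (iC.-1)%:R * dC by rewrite mulr_ge0 // ltW.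
have t'ge : 0 <= (iC.-1)%:R * dC + iF.+1%:R * dF by rewrite addr_ge0 // mulr_ge0 // ltW.
have ub : ubound [set s : R | 0 <= s /\ sat (reach X0 k s) I] ((iC.-1)%:R * dC + iF.+1%:R * dF).
  move=> s [s0 ss]; rewrite leNgt; apply/negP => lts.
  apply: nF; exact: (@sat_conv _ _ _ _ _ _ _ cX cI X0I t'ge (ltW lts) ss).
have ne : [set s : R | 0 <= s /\ sat (reach X0 k s) I] !=set0.
  by exists 0; split.
have tle := ge_sup ne ub.
have hs : ((iC.-1)%:R * dC + iF%:R * dF) <= sup [set s : R | 0 <= s /\ sat (reach X0 k s) I].
  apply: sup_upper_bound; first by split=> //; exists ((iC.-1)%:R * dC + iF.+1%:R * dF).
  split; first by rewrite addr_ge0 // mulr_ge0 // ltW.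
  exact: hF.
set t := sup _ in tle hs *.
have e : (iF.+1)%:R * dF = iF%:R * dF + dF by rewrite -[iF.+1]addn1 natrD mulrDl mul1r.
rewrite e in tle *.
rewrite ler_norml; apply/andP; split; lra.
Qed.
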